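(* Let $X$ be an $X$-set parameter, let $G$ and $G'$ be graphs with no isolated vertices, and let $\tilde\varphi:\mathscr{X}^{\rm TAR}(G)\to\mathscr{X}^{\rm TAR}(G')$ be a graph isomorphism. Then $R'=V(G')\setminus\tilde\varphi(V(G))$ is an $X$-irrelevant set of $G'$, and $\varphi=\nu_{R'}\circ\tilde\varphi$ is an isomorphism from $\mathscr{X}^{\rm TAR}(G)$ to $\mathscr{X}^{\rm TAR}(G')$ such that $|\varphi(S)|=|S|$ for every vertex $S$ of $\mathscr{X}^{\rm TAR}(G)$.
   Context: All graphs are simple, finite, with nonempty vertex set. An $X$-set parameter is a graph parameter $X(G)$ defined as the minimum cardinality of an $X$-set of $G$, where the $X$-sets of each graph are subsets of its vertex set determined by some property satisfying: (1) supersets (within $V(G)$) of $X$-sets are $X$-sets; (2) the empty set is never an $X$-set; (3) an $X$-set of a disconnected graph is the union of an $X$-set of each component; (4) if $G$ has no isolated vertices, every set of $|V(G)|-1$ vertices is an $X$-set. The $X$-TAR graph $\mathscr{X}^{\rm TAR}(G)$ has as vertices all $X$-sets of $G$, with $S_1,S_2$ adjacent iff $|S_1\ominus S_2|=1$ (symmetric difference). A vertex $v$ of $G$ is $X$-irrelevant if $v\notin S$ for every minimal $X$-set $S$ of $G$; a set $R\subseteq V(G)$ is $X$-irrelevant if all its vertices are. For $R\subseteq V(G)$, $\nu_R$ is the map on $X$-sets of $G$ given by $\nu_R(S)=S\ominus R$. *)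

(* Defs.v *)
From mathcomp Require Import all_boot.
Set Implicit Arguments. Unset Strict Implicit. Unset Printing Implicit Defensive.

Definition simple_graph (T : finType) (e : rel T) : Prop :=
  [/\ 0 < #|T|, symmetric e & irreflexive e].

Definition no_isolated (T : finType) (e : rel T) : Prop :=
  forall x : T, exists y, e x y.

Definition component (T : finType) (e : rel T) (x : T) : {set T} :=
  [set y | connect e x y].
Definition components (T : finType) (e : rel T) : {set {set T}} :=
  [set component e x | x : T].

Definition induced (T : finType) (e : rel T) (C : {set T}) :
  rel {x : T | x \in C} := fun x y => e (val x) (val y).

Definition restr (T : finType) (C : {set T}) (S : {set T}) :
  {set {x : T | x \in C}} := [set x | val x \in S].

(* An X-set property assigns to every graph the predicate "is an X-set". *)
Definition Xprop := forall T : finType, rel T -> {set T} -> bool.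

Definition is_Xset_param (Xs : Xprop) : Prop :=
  (forall (T : finType) (e : rel T), simple_graph e ->
     forall S S' : {set T}, S \subset S' -> Xs T e S -> Xs T e S') /\
  (forall (T : finType) (e : rel T), simple_graph e -> ~~ Xs T e set0) /\
  (forall (T : finType) (e : rel T), simple_graph e -> 1 < #|components e| ->
     forall S : {set T},
       Xs T e S <-> (forall C, C \in components e ->
                      Xs _ (@induced T e C) (@restr T C S))) /\
  (forall (T : finType) (e : rel T), simple_graph e -> no_isolated e ->
     forall S : {set T}, #|S| = #|T| - 1 -> Xs T e S).

Definition symdiff (T : finType) (A B : {set T}) : {set T} := (A :\: B) :|: (B :\: A).

Definition tar_adj (T : finType) (A B : {set T}) : bool := #|symdiff A B| == 1.

(* f is a graph isomorphism from X^TAR(G) to X^TAR(G') (as a map on X-sets) *)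
Definition TAR_iso (Xs : Xprop) (T T' : finType) (e : rel T) (e' : rel T')
    (f : {set T} -> {set T'}) : Prop :=
  [/\ forall S, Xs T e S -> Xs T' e' (f S),
      forall S1 S2, Xs T e S1 -> Xs T e S2 -> f S1 = f S2 -> S1 = S2,
      forall S', Xs T' e' S' -> exists2 S, Xs T e S & f S = S' &
      forall S1 S2, Xs T e S1 -> Xs T e S2 -> tar_adj (f S1) (f S2) = tar_adj S1 S2].

Definition minimal_Xset (Xs : Xprop) (T : finType) (e : rel T) (S : {set T}) : bool :=
  minset (Xs T e) S.

Definition Xirrelevant_set (Xs : Xprop) (T : finType) (e : rel T) (R : {set T}) : Prop :=
  forall v, v \in R -> forall S, minimal_Xset Xs e S -> v \notin S.

Definition nu (T : finType) (R : {set T}) (S : {set T}) : {set T} := symdiff S R.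

(* Main.v *)
Require Import Defs.
From mathcomp Require Import all_boot.
From mathcomp Require Import zify.
Set Implicit Arguments. Unset Strict Implicit. Unset Printing Implicit Defensive.

Ltac sdsolve := apply/setP => z; rewrite /symdiff !inE.

Lemma sdC (T : finType) (A B : {set T}) : symdiff A B = symdiff B A.
Proof. by sdsolve; case: (z \in A); case: (z \in B). Qed.
Lemma sdK (T : finType) (A B : {set T}) : symdiff A (symdiff A B) = B.
Proof. by sdsolve; case: (z \in A); case: (z \in B). Qed.
Lemma sdnu (T : finType) (A B R : {set T}) :
  symdiff (symdiff A R) (symdiff B R) = symdiff A B.
Proof. by sdsolve; case: (z \in A); case: (z \in B); case: (z \in R). Qed.
Lemma sdT (T : finType) (A : {set T}) : symdiff A setT = ~: A.
Proof. by sdsolve; case: (z \in A). Qed.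
Lemma sdvv (T : finType) (A : {set T}) : symdiff A A = set0.
Proof. by sdsolve; case: (z \in A). Qed.
Lemma sdtri (T : finType) (A B C : {set T}) :
  symdiff A C \subset symdiff A B :|: symdiff B C.
Proof. apply/subsetP => z; rewrite /symdiff !inE.
  by case: (z \in A); case: (z \in B); case: (z \in C). Qed.
Lemma sdstep (T : finType) (A B : {set T}) y : y \in symdiff A B ->
  symdiff (symdiff A [set y]) B = (symdiff A B) :\ y.
Proof.
move=> H; apply/setP => z; move: H; rewrite /symdiff !inE.
case: (eqVneq z y) => [->|_] //=.
  by case: (y \in A); case: (y \in B).
by case: (z \in A); case: (z \in B).
Qed.
Lemma sdeq0 (T : finType) (A B : {set T}) : symdiff A B = set0 -> A = B.
Proof. move=> H; apply/setP => z; move/setP: H => /(_ z); rewrite /symdiff !inE.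
  by case: (z \in A); case: (z \in B). Qed.
Lemma sd1 (T : finType) (A B : {set T}) : tar_adj A B ->
  exists y, B = symdiff A [set y].
Proof. rewrite /tar_adj => /cards1P [y Hy]; exists y; by rewrite -Hy sdK. Qed.
Lemma sdnot (T : finType) (D : {set T}) y : y \notin D ->
  symdiff D [set y] = y |: D.
Proof. move=> H; apply/setP => z; move: H; rewrite /symdiff !inE.
case: (eqVneq z y) => [->|_] /=; first by case: (y \in D).
by case: (z \in D). Qed.
Lemma sdin (T : finType) (D : {set T}) y : y \in D ->
  symdiff D [set y] = D :\ y.
Proof. move=> H; apply/setP => z; move: H; rewrite /symdiff !inE.
case: (eqVneq z y) => [->|_] /=; first by case: (y \in D).
by case: (z \in D). Qed.
Lemma sdWR (T : finType) (W : {set T}) : symdiff W (setT :\: W) = setT.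
Proof. by sdsolve; case: (z \in W). Qed.
Lemma sd_card_le (T : finType) (A B C : {set T}) :
  #|symdiff A C| <= #|symdiff A B| + #|symdiff B C|.
Proof. apply: leq_trans (subset_leq_card (sdtri A B C)) _. exact: leq_card_setU. Qed.

Inductive pth (T : finType) (F : {set T} -> bool) : {set T} -> {set T} -> nat -> Prop :=
| pth0 A : pth F A A 0
| pthS A B C k : F B -> tar_adj A B -> pth F B C k -> pth F A C k.+1.

Lemma pth_le (T : finType) (F : {set T} -> bool) A C k :
  pth F A C k -> #|symdiff A C| <= k.
Proof.
elim => [A'|A' B C' k' _ Hadj _ IH]; first by rewrite sdvv cards0.
apply: leq_trans (sd_card_le A' B C') _.
by move: Hadj; rewrite /tar_adj => /eqP ->; rewrite add1n ltnS.
Qed.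

Lemma pth_ex (T : finType) (F : {set T} -> bool)
  (upc : forall S S' : {set T}, S \subset S' -> F S -> F S') k :
  forall A B, F A -> F B -> #|symdiff A B| = k -> pth F A B k.
Proof.
elim: k => [|k IH] A B FA FB Hk.
  by move/cards0_eq/sdeq0: Hk => ->; constructor.
have [y Hy FA'] : exists2 y, y \in symdiff A B & F (symdiff A [set y]).
  have [H0|/set0Pn [y Hy]] := eqVneq (B :\: A) set0; last first.
    exists y; first by move: Hy; rewrite /symdiff !inE => /andP[/negbTE -> ->]; rewrite orbT.
    apply: upc FA; apply/subsetP => z; move: Hy; rewrite /symdiff !inE.
    move=> Hy Hz; case: (eqVneq z y) => [Ezy|] /=; last by rewrite Hz.
    by move: Hz Hy; rewrite Ezy => ->.
  have : symdiff A B != set0 by apply/eqP => H; move: Hk; rewrite H cards0.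
  case/set0Pn => y Hy; exists y => //.
  apply: upc FB; apply/subsetP => z Hz.
  move/setP: H0 => /(_ z); rewrite !inE Hz andbT => /negbFE Hza.
  idtac.
  case: (eqVneq z y) => [Ezy|] /=; first by move: Hy; rewrite /symdiff !inE -Ezy Hz Hza.
  by rewrite Hza.
apply: (@pthS _ _ _ (symdiff A [set y])) => //.
  by rewrite /tar_adj sdK cards1.
apply: IH => //; rewrite sdstep //.
by move: Hk; rewrite (cardsD1 y) Hy add1n => [[]].
Qed.

Lemma sdKr (T : finType) (A R : {set T}) : symdiff (symdiff A R) R = A.
Proof. by sdsolve; case: (z \in A); case: (z \in R). Qed.
Lemma sdsw (T : finType) (S W : {set T}) y :
  symdiff (symdiff S [set y]) W = symdiff (symdiff S W) [set y].
Proof. by sdsolve; case: (z \in S); case: (z \in W); case: (z == y). Qed.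

Lemma pth_map (Xs : Xprop) (T T' : finType) (e : rel T) (e' : rel T')
  (f : {set T} -> {set T'}) (H : TAR_iso Xs e e' f) A C k :
  pth (Xs T e) A C k -> Xs T e A -> pth (Xs T' e') (f A) (f C) k.
Proof.
case: H => Hmap Hinj Hsurj Hadj.
elim => [A'|A' B C' k' XB adj _ IH] XA; first by constructor.
apply: (@pthS _ _ _ (f B)); [exact: Hmap | by rewrite Hadj | exact: IH].
Qed.

Lemma pth_back (Xs : Xprop) (T T' : finType) (e : rel T) (e' : rel T')
  (f : {set T} -> {set T'}) (H : TAR_iso Xs e e' f) A' C' k :
  pth (Xs T' e') A' C' k -> forall A C, Xs T e A -> Xs T e C ->
  A' = f A -> C' = f C -> pth (Xs T e) A C k.
Proof.
case: H => Hmap Hinj Hsurj Hadj.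
elim => [A0|A0 B' C0 k' XB adj _ IH] A C XA XC EA EC.
  by rewrite (Hinj A C) //; [constructor | rewrite -EA -EC].
have [B XB' EB] := Hsurj B' XB.
apply: (@pthS _ _ _ B) => //; last exact: IH.
by rewrite -Hadj // -EA EB.
Qed.

Lemma iso_dist (Xs : Xprop) (T T' : finType) (e : rel T) (e' : rel T')
  (f : {set T} -> {set T'})
  (upc : forall S S' : {set T}, S \subset S' -> Xs T e S -> Xs T e S')
  (upc' : forall S S' : {set T'}, S \subset S' -> Xs T' e' S -> Xs T' e' S')
  (H : TAR_iso Xs e e' f) A C : Xs T e A -> Xs T e C ->
  #|symdiff (f A) (f C)| = #|symdiff A C|.
Proof.
move=> XA XC; have [Hmap _ _ _] := H.
apply/eqP; rewrite eqn_leq; apply/andP; split.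
  apply: pth_le; apply: (pth_map H) => //; exact: pth_ex.
apply: pth_le; apply: (pth_back H) => //.
exact: pth_ex (Hmap _ XA) (Hmap _ XC) _.
Qed.

Lemma nbr_card (Xs : Xprop) (T T' : finType) (e : rel T) (e' : rel T')
  (f : {set T} -> {set T'}) (H : TAR_iso Xs e e' f) P : Xs T e P ->
  #|[set Q | Xs T' e' Q && tar_adj (f P) Q]| = #|[set Q | Xs T e Q && tar_adj P Q]|.
Proof.
move=> XP; case: (H) => Hmap Hinj Hsurj Hadj.
rewrite -(@card_in_imset _ _ f); last first.
  by move=> S1 S2; rewrite !inE => /andP[X1 _] /andP[X2 _]; apply: Hinj.
apply: eq_card => Q; rewrite inE; apply/andP/imsetP.
  case=> XQ adj; have [S XS ES] := Hsurj Q XQ.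
  exists S => //; rewrite inE XS /= -Hadj //; by rewrite ES.
case=> S; rewrite inE => /andP[XS adj] ->; split; first exact: Hmap.
by rewrite Hadj.
Qed.

Lemma nbrT (Xs : Xprop) (T : finType) (e : rel T)
  (HV : forall v, Xs T e (setT :\ v)) :
  #|[set Q | Xs T e Q && tar_adj setT Q]| = #|T|.
Proof.
have -> : [set Q | Xs T e Q && tar_adj setT Q] =
          (fun v => symdiff setT [set v]) @: [set: T].
  apply/setP => Q; rewrite inE; apply/andP/imsetP.
    by case=> _ /sd1 [y ->]; exists y.
  case=> v _ ->; split; [by rewrite sdin ?inE | by rewrite /tar_adj sdK cards1].
rewrite card_imset ?cardsT // => v w E.
by have := congr1 (symdiff setT) E; rewrite !sdK => /set1_inj.
Qed.

Theorem theorem2p10 (Xs : Xprop) (HX : is_Xset_param Xs)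
    (T T' : finType) (e : rel T) (e' : rel T')
    (HG : simple_graph e) (HG' : simple_graph e')
    (HiG : no_isolated e) (HiG' : no_isolated e')
    (phit : {set T} -> {set T'}) (Hphit : TAR_iso Xs e e' phit) :
  let R' := [set: T'] :\: phit [set: T] in
  let phi := fun S => nu R' (phit S) in
  Xirrelevant_set Xs e' R' /\
  TAR_iso Xs e e' phi /\
  (forall S : {set T}, Xs T e S -> #|phi S| = #|S|).
Proof.
move=> R' phi.
case: (HX) => Hup [H0 [_ H4]].
have upc := Hup T e HG; have upc' := Hup T' e' HG'.
case: (Hphit) => Hmap Hinj Hsurj Hadj.
have dist := iso_dist upc upc' Hphit.
have XVm : forall v, Xs T e (setT :\ v).
  move=> v; apply: H4 => //; have := cardsD1 v [set: _]; rewrite cardsT in_setT /=; lia.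
have XVm' : forall v, Xs T' e' (setT :\ v).
  move=> v; apply: H4 => //; have := cardsD1 v [set: _]; rewrite cardsT in_setT /=; lia.
have XV : Xs T e setT.
  case: HG => /card_gt0P [x _] _ _; exact: upc (subsetT _) (XVm x).
set W' := phit setT.
have HR' : forall z, (z \in R') = (z \notin W') by move=> z; rewrite !inE andbT.
have irr : Xirrelevant_set Xs e' R'.
  move=> v; rewrite HR' => vW S' /minsetP [XS' minS'].
  apply/negP => vS.
  have [M XM EM] := Hsurj S' XS'.
  set D := symdiff S' W'.
  have kD : #|D| = #|~: M| by rewrite /D -EM dist // sdT.
  set A := [set symdiff M [set u] | u in ~: M].
  have XA : forall S, S \in A -> Xs T e S.
    move=> S /imsetP [u]; rewrite inE => uM ->; apply: upc XM.
    by rewrite sdnot //; apply: subsetU1.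
  have cA : #|A| = #|~: M|.
    apply: card_in_imset => u w _ _ E.
    by have := congr1 (symdiff M) E; rewrite !sdK => /set1_inj.
  set B := [set symdiff S' [set y] | y in D].
  have cB : #|B| = #|D|.
    apply: card_in_imset => u w _ _ E.
    by have := congr1 (symdiff S') E; rewrite !sdK => /set1_inj.
  have cfA : #|phit @: A| = #|A|.
    by apply: card_in_imset => S1 S2 H1 H2; apply: Hinj; apply: XA.
  have sub : phit @: A \subset B.
    apply/subsetP => N /imsetP [S SA ->].
    have XS := XA S SA.
    move: SA => /imsetP [u]; rewrite inE => uM ES.
    have d1 : tar_adj S' (phit S).
      by rewrite -EM Hadj // ES /tar_adj sdK cards1.
    have [y Ey] := sd1 d1.
    rewrite Ey; apply/imsetP; exists y => //.
    case: (boolP (y \in D)) => // yD.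
    have := dist S setT XS XV.
    rewrite Ey -/W' sdsw -/D sdnot // ES (sdT (symdiff M [set u])) sdnot // cardsU1 yD.
    have := cardsC (u |: M); have := cardsC M; rewrite cardsU1 uM.
    move=> h1 h2 h3; lia.
  have eqAB : phit @: A = B.
    by apply/eqP; rewrite eqEcard sub /= cfA cA cB kD.
  have : symdiff S' [set v] \in phit @: A.
    rewrite eqAB; apply/imsetP; exists v => //.
    by rewrite /D /symdiff !inE vS (negbTE vW).
  case/imsetP => S0 HS0 E.
  have XS0' : Xs T' e' (symdiff S' [set v]) by rewrite E; apply: Hmap; apply: XA.
  rewrite sdin // in XS0'.
  by have := minS' _ XS0' (subD1set S' v) => /setP /(_ v); rewrite !inE eqxx vS.
have Xnu : forall S', Xs T' e' S' -> Xs T' e' (nu R' S').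
  move=> S' XS'; have [M' minM' sub] := minset_exists (P := Xs T' e') XS'.
  case/minsetP: (minM') => XM' _.
  apply: upc' XM'; apply/subsetP => z zM.
  have zR : z \notin R'.
    by apply/negP => zR; move: (irr z zR M' minM'); rewrite zM.
  by rewrite /nu /symdiff !inE (subsetP sub z zM) /=; move: zR; rewrite HR' negbK => ->.
have Hphi : TAR_iso Xs e e' phi.
  split.
  - by move=> S XS; apply: Xnu; apply: Hmap.
  - move=> S1 S2 X1 X2 E; apply: Hinj => //.
    by have := congr1 (nu R') E; rewrite /phi /nu !sdKr.
  - move=> S' XS'; have [S XS ES] := Hsurj _ (Xnu _ XS').
    by exists S => //; rewrite /phi ES /nu sdKr.
  - by move=> S1 S2 X1 X2; rewrite /phi /nu /tar_adj sdnu; apply: Hadj.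
have phiV : phi setT = setT by rewrite /phi /nu /R' sdWR.
have nn : #|T| = #|T'|.
  by rewrite -(nbrT XVm) -(nbr_card Hphi XV) phiV nbrT.
split=> //; split=> // S XS.
have := iso_dist upc upc' Hphi XS XV.
rewrite phiV !sdT.
have := cardsC S; have := cardsC (phi S). lia.
Qed.
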